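(* Let $G=(V,E)$ be a finite directed acyclic graph, $G'=(V,E')$ its minimum equivalent graph, $S$ a set of streams, and $f:V\to S$ a stream assignment satisfying maximum logical concurrency on $G$. Then $\mathrm{min}_{sync}(G,f)=\mathrm{min}_{sync}(G',f)$.
   Context: A path from $u$ to $v$ in a directed graph is a nonempty sequence of edges $(u,w_1),\dots,(w_k,v)$ of that graph. The minimum equivalent graph (MEG) of a finite DAG $G=(V,E)$ is the subgraph $G'=(V,E')$, $E'\subseteq E$, with the same vertex set and the smallest number of edges among subgraphs having the same reachability relation as $G$. A stream assignment is any function $f:V\to S$. It satisfies maximum logical concurrency on a graph $H$ with vertex set $V$ if for all distinct $u,v$ with no path between them in either direction in $H$, $f(u)\neq f(v)$. For a directed graph $H=(V,E_H)$, a synchronization plan $\Lambda\subseteq E_H$ is safe for $f$ on $H$ if for every edge $(u,v)\in E_H$, either $f(u)=f(v)$ or there is a path $P\subseteq E_H$ from $u$ to $v$ with $P\cap\Lambda\neq\emptyset$. Define $\mathrm{min}_{sync}(H,f)=\min\{|\Lambda| : \Lambda\subseteq E_H \text{ is safe for } f \text{ on } H\}$. *)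

(* Defs.v *)
From mathcomp Require Import all_boot.
Set Implicit Arguments. Unset Strict Implicit. Unset Printing Implicit Defensive.

Definition erel (V : finType) (E : {set V * V}) : rel V := fun u v => (u, v) \in E.

(* There is a (nonempty) path from u to v using edges of E. *)
Definition path_in (V : finType) (E : {set V * V}) (u v : V) : bool :=
  [exists w, ((u, w) \in E) && connect (erel E) w v].

Definition acyclic (V : finType) (E : {set V * V}) : Prop :=
  forall v, ~~ path_in E v v.

Definition same_reach (V : finType) (E1 E2 : {set V * V}) : Prop :=
  forall u v, path_in E1 u v = path_in E2 u v.

Definition is_MEG (V : finType) (E E' : {set V * V}) : Prop :=
  [/\ E' \subset E, same_reach E E' &
      forall E'' : {set V * V}, E'' \subset E -> same_reach E E'' -> #|E'| <= #|E''| ].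

Definition max_logical_concurrency (V : finType) (S : Type) (E : {set V * V})
  (f : V -> S) : Prop :=
  forall u v, u <> v -> ~~ path_in E u v -> ~~ path_in E v u -> f u <> f v.

Definition safe (V : finType) (S : eqType) (E : {set V * V}) (f : V -> S)
  (L : {set V * V}) : bool :=
  (L \subset E) &&
  [forall e in E, (f e.1 == f e.2) ||
     [exists w in L, connect (erel E) e.1 w.1 && connect (erel E) w.2 e.2]].

(* min_sync(H,f); E itself is always safe, so #|E| is an attained upper bound *)
Definition min_sync (V : finType) (S : eqType) (E : {set V * V}) (f : V -> S) : nat :=
  \big[minn/#|E|]_(L : {set V * V} | safe E f L) #|L|.

(* Main.v *)
Require Import Defs.
From mathcomp Require Import all_boot.
Set Implicit Arguments. Unset Strict Implicit. Unset Printing Implicit Defensive.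

Section Aux.
Variable V : finType.
Implicit Types E F : {set V * V}.

Lemma path_in_conn E x y : path_in E x y -> connect (erel E) x y.
Proof.
case/existsP=> w /andP[h1 h2]; apply: connect_trans h2; exact: connect1.
Qed.

Lemma conn_path_in E x y :
  connect (erel E) x y = (x == y) || path_in E x y.
Proof.
apply/idP/idP.
  case/connectP=> [[|z p]] /=; first by move=> _ ->; rewrite eqxx.
  case/andP=> hxz hp hy; apply/orP; right; apply/existsP; exists z.
  rewrite -[(x, z) \in E]/(erel E x z) hxz /=; apply/connectP; by exists p.
case/orP; first by move/eqP->.
exact: path_in_conn.
Qed.

Lemma conn_same E F x y : same_reach E F ->
  connect (erel E) x y = connect (erel F) x y.
Proof. by move=> h; rewrite !conn_path_in h. Qed.

Lemma conn_subset E F x y : E \subset F ->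
  connect (erel E) x y -> connect (erel F) x y.
Proof.
move=> sEF; apply: connect_sub => a b hab; apply: connect1.
by rewrite /erel (subsetP sEF _ hab).
Qed.

Lemma path_in_edge_conn E x y z : (x, y) \in E -> connect (erel E) y z ->
  path_in E x z.
Proof. by move=> h1 h2; apply/existsP; exists y; rewrite h1. Qed.

Lemma path_conn_trans E a b c : path_in E a b -> connect (erel E) b c ->
  path_in E a c.
Proof.
case/existsP=> t /andP[h1 h2] h3; apply: (path_in_edge_conn h1).
exact: connect_trans h2 h3.
Qed.

Lemma conn_path_trans E a b c : connect (erel E) a b -> path_in E b c ->
  path_in E a c.
Proof.
rewrite conn_path_in; case/orP=> [/eqP -> //|hab hbc].
apply: path_conn_trans hab _; exact: path_in_conn.
Qed.

Lemma connB E u v a b : connect (erel E) a b -> ~~ connect (erel E) a u ->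
  connect (erel (E :\ (u, v))) a b.
Proof.
case/connectP=> p; elim: p a => [|z p IH] a /=; first by move=> _ -> _.
case/andP=> haz hp hb hau.
have hzu : ~~ connect (erel E) z u.
  apply: contra hau => hzu; apply: connect_trans hzu; exact: connect1.
apply: (connect_trans (y := z)); last by apply: IH.
apply: connect1; rewrite /erel in_setD1 -[(a, z) \in E]/(erel E a z) haz andbT.
apply/eqP=> [[ea ez]]; move: hau; by rewrite ea connect0.
Qed.

Lemma safe_self (S : eqType) E (f : V -> S) : safe E f E.
Proof.
rewrite /safe subxx /=; apply/forall_inP=> e he; apply/orP; right.
by apply/exists_inP; exists e => //; rewrite !connect0.
Qed.

Lemma min_sync_le (S : eqType) E (f : V -> S) L : safe E f L ->
  min_sync E f <= #|L|.
Proof.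
move=> h; rewrite /min_sync.
have : L \in index_enum {set V * V} by rewrite mem_index_enum.
elim: (index_enum _) => [|x s IH] //; rewrite big_cons inE.
case/orP=> [/eqP <-|hs]; first by rewrite h geq_minl.
case: (safe E f x); last exact: IH.
by rewrite geq_min IH ?orbT.
Qed.

Lemma min_sync_att (S : eqType) E (f : V -> S) :
  exists2 L, safe E f L & min_sync E f = #|L|.
Proof.
rewrite /min_sync; apply: (big_ind (fun x => exists2 L, safe E f L & x = #|L|)).
- by exists E => //; exact: safe_self.
- move=> x y [L1 h1 ->] [L2 h2 ->]; rewrite /minn; case: ltnP => _.
  by exists L1. by exists L2.
- by move=> L h; exists L.
Qed.

End Aux.

Theorem mainTheorem4 (V : finType) (S : eqType) (E E' : {set V * V})
  (f : V -> S) :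
  acyclic E -> is_MEG E E' -> max_logical_concurrency E f ->
  min_sync E f = min_sync E' f.
Proof.
move=> acy [sub sr minE] _.
have acy' : acyclic E' by move=> a; rewrite -sr.
have cE a b : connect (erel E) a b = connect (erel E') a b by apply: conn_same.
apply/eqP; rewrite eqn_leq; apply/andP; split.
-
  have [L hL ->] := min_sync_att E' f; apply: min_sync_le.
  case/andP: hL => sL hL; apply/andP; split; first exact: subset_trans sL sub.
  have key : forall x y, connect (erel E') x y -> f x != f y ->
      [exists w in L, connect (erel E) x w.1 && connect (erel E) w.2 y].
    move=> x y /connectP[p]; elim: p x => [|z p IH] x /=.
      by move=> _ ->; rewrite eqxx.
    case/andP=> hxz hp hy hf.
    have := forall_inP hL (x, z) hxz; rewrite /=.
    case: (eqVneq (f x) (f z)) => [fxz|fxz] /=.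
      move=> _; have /exists_inP[w hw /andP[h1 h2]] : [exists w in L,
        connect (erel E) z w.1 && connect (erel E) w.2 y].
        by apply: IH => //; rewrite -fxz.
      apply/exists_inP; exists w => //; rewrite h2 andbT.
      apply: connect_trans h1; apply: connect1; exact: (subsetP sub _ hxz).
    case/exists_inP=> w hw /andP[h1 h2]; apply/exists_inP; exists w => //.
    rewrite cE h1 /= cE; apply: connect_trans h2 _.
    by apply/connectP; exists p.
  apply/forall_inP=> e he; case: (eqVneq (f e.1) (f e.2)) => //= hne.
  apply: key => //; rewrite -cE; apply: connect1; by rewrite /erel -surjective_pairing.
- have [L hL ->] := min_sync_att E f.
  apply: (leq_trans (min_sync_le (L := L :&: E') _)); last first.
    by apply: subset_leq_card; apply: subsetIl.
  case/andP: hL => sL hL; apply/andP; split; first exact: subsetIr.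
  apply/forall_inP=> [[u v]] huv /=.
  case: (eqVneq (f u) (f v)) => //= hne.
  have := forall_inP hL (u, v) (subsetP sub _ huv); rewrite /= (negPf hne) /=.
  case/exists_inP=> [[w1 w2]] hw /andP /= [h1 h2].
  case: (eqVneq (w1, w2) (u, v)) => [ew|nw].
    apply/exists_inP; exists (u, v); last by rewrite !connect0.
    by rewrite inE huv andbT -ew.
  exfalso.
  have hwE : (w1, w2) \in E by apply: (subsetP sL).
  have [x hux hxv] : exists2 x, path_in E' u x & path_in E' x v.
    case: (eqVneq w1 u) => [e1|n1].
      have n2 : w2 != v by apply: contraNneq nw => e2; rewrite e1 e2.
      exists w2.
        by rewrite -sr -e1; apply: (path_in_edge_conn hwE); rewrite connect0.
      by move: h2; rewrite cE conn_path_in (negPf n2).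
    exists w1.
      by move: h1; rewrite cE conn_path_in eq_sym (negPf n1).
    by rewrite -sr; apply: (path_in_edge_conn hwE).
  set E'' := E' :\ (u, v).
  have alt : path_in E'' u v.
    case/existsP: (hux) => y /andP[huy hyx].
    have yv : y != v.
      apply/eqP=> ey; move: hyx; rewrite ey => hvx.
      have := acy' v; apply/negP/negPn; exact: conn_path_trans hvx hxv.
    have nyu : ~~ connect (erel E') y u.
      apply/negP=> hyu; have := acy' u; apply/negP/negPn.
      exact: path_in_edge_conn huy hyu.
    have nxu : ~~ connect (erel E') x u.
      apply/negP=> hxu; have := acy' u; apply/negP/negPn.
      exact: path_conn_trans hux hxu.
    apply: (@path_in_edge_conn _ _ _ y).
      move: huy; rewrite /erel in_setD1 => ->; rewrite andbT.
      by apply: contra yv => /eqP[->].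
    apply: connect_trans (connB v hyx nyu) _.
    exact: connB (path_in_conn hxv) nxu.
  have sr'' : same_reach E E''.
    have conn'' : forall a b, connect (erel E') a b -> connect (erel E'') a b.
      apply: connect_sub => a b hab.
      case: (eqVneq (a, b) (u, v)) => [[-> ->]|nab]; first exact: path_in_conn.
      by apply: connect1; rewrite /erel in_setD1 nab.
    move=> a b; rewrite sr; apply/idP/idP.
      case/existsP=> t /andP[hat htb].
      case: (eqVneq (a, t) (u, v)) => [[ea et]|nat].
        case/existsP: alt => s /andP[h3 h4]; apply: path_in_edge_conn.
          by rewrite ea; exact: h3.
        apply: connect_trans h4 _; rewrite -et; exact: conn'' htb.
      apply: (path_in_edge_conn (y := t)); first by rewrite in_setD1 nat.
      exact: conn'' htb.
    case/existsP=> t /andP[hat htb]; apply: (path_in_edge_conn (y := t)).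
      by move: hat; rewrite in_setD1 => /andP[].
    apply: conn_subset htb; exact: subD1set.
  have := minE E'' (subset_trans (subD1set _ _) sub) sr''.
  by rewrite /E'' (cardsD1 (u, v) E') huv ltnn.
Qed.
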